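(* Let $G=(V,E,C,\ell)$ be an edge-labeled hypergraph with maximum hyperedge size $r$. Construct an undirected weighted graph $G'$ on node set $V'=V\cup\{v_c: c\in C\}$ (one new terminal node per category) as follows: for each hyperedge $e\in E$, add a clique on the nodes of $e$ together with the terminal $v_{\ell(e)}$, each clique edge having weight $1/|e|$; weights of overlapping edges are added. For a clustering $Y:V\to C$, let $\mathrm{MultiwayCut}(Y)$ be the total weight of edges of $G'$ whose endpoints lie in different parts of the partition of $V'$ into the $|C|$ sets $\{v_c\}\cup Y^{-1}(c)$, $c\in C$. Then for every clustering $Y$, \[ \mathrm{CatEdgeClus}(Y)\le \mathrm{MultiwayCut}(Y)\le \frac{r+1}{2}\,\mathrm{CatEdgeClus}(Y). \]
   Context: An edge-labeled hypergraph $G=(V,E,C,\ell)$ consists of a finite node set $V$, a finite collection $E$ of hyperedges (nonempty subsets of $V$), a finite set $C$ of categories, and a labeling $\ell:E\to C$. A clustering is a map $Y:V\to C$. For $e\in E$, $m_Y(e)=1$ if $Y[i]\neq\ell(e)$ for some $i\in e$, and $m_Y(e)=0$ otherwise; $\mathrm{CatEdgeClus}(Y)=\sum_{e\in E}m_Y(e)$. *)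

(* Defs.v *)
From HB Require Import structures.
From mathcomp Require Import all_boot all_order all_algebra.
Set Implicit Arguments. Unset Strict Implicit. Unset Printing Implicit Defensive.
Import Order.TTheory GRing.Theory Num.Theory.
Local Open Scope ring_scope.

(* Edge-labeled hypergraph: node type V, category type C, hyperedges indexed
   by a finite type I (so repeated hyperedges are allowed), hyperedge
   i has node set e i and label l i. *)

Definition mistake (V C : finType) (e : {set V}) (c : C) (Y : V -> C) : bool :=
  [exists v in e, Y v != c].

Definition CatEdgeClus (V C I : finType) (e : I -> {set V}) (l : I -> C)
  (Y : V -> C) : nat :=
  \sum_(i : I) mistake (e i) (l i) Y.

Definition max_edge_size (V I : finType) (e : I -> {set V}) : nat :=
  \max_(i : I) #|e i|.

Definition Vp (V C : finType) : finType := (V + C)%type.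

Definition clique_nodes (V C : finType) (e : {set V}) (c : C) : {set Vp V C} :=
  (@inl V C) @: e :|: [set inr c].

Definition weightG' (V C I : finType) (e : I -> {set V}) (l : I -> C)
  (x y : Vp V C) : rat :=
  \sum_(i : I | [&& x != y, x \in clique_nodes (e i) (l i)
                 & y \in clique_nodes (e i) (l i)]) (#|e i|%:R)^-1.

Definition part (V C : finType) (Y : V -> C) (x : Vp V C) : C :=
  match x with inl v => Y v | inr c => c end.

(* MultiwayCut(Y): total weight of edges of G' whose endpoints are in
   different parts; each unordered edge {x,y} is counted once, hence the
   factor 1/2 over ordered pairs (weights are symmetric, zero on the diagonal). *)
Definition MultiwayCut (V C I : finType) (e : I -> {set V}) (l : I -> C)
  (Y : V -> C) : rat :=
  2^-1 * \sum_(x : Vp V C) \sum_(y : Vp V C | part Y x != part Y y)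
           weightG' e l x y.

(* Main.v *)
Require Import Defs.
From HB Require Import structures.
From mathcomp Require Import all_boot all_order all_algebra.
From mathcomp Require Import zify ring lra.
Import Order.TTheory GRing.Theory Num.Theory.
Local Open Scope ring_scope.

Lemma cnt_lower (T C : finType) (K : {set T}) (p : T -> C) (c : C) (t u : T) :
  t \in K -> p t = c -> u \in K -> p u != c ->
  (2 * (#|K| - 1) <= \sum_(x in K) #|[set y in K | p y != p x]|)%N.
Proof.
move=> tK pt uK pu.
set A := [set y in K | p y == c].
rewrite (big_setID A) /=.
have KA : K :&: A = A by apply/setIidPr; apply/subsetP => y; rewrite inE => /andP[].
have h1 : (\sum_(x in K :&: A) (#|K| - #|A|) <=
   \sum_(x in K :&: A) #|[set y in K | p y != p x]|)%N.
  apply: leq_sum => x; rewrite !inE => /and3P [_ _ /eqP px].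
  have -> : [set y in K | p y != p x] = K :\: A.
    by apply/setP => y; rewrite !inE px; case: (y \in K); rewrite ?andbT ?andbF.
  by rewrite cardsD KA.
have h2 : (\sum_(x in K :\: A) #|A| <=
   \sum_(x in K :\: A) #|[set y in K | p y != p x]|)%N.
  apply: leq_sum => x; rewrite !inE => /andP [nA xK].
  apply: subset_leq_card; apply/subsetP => y; rewrite !inE => /andP [yK /eqP py].
  rewrite yK /=; apply/negP => /eqP E; move: nA; by rewrite xK -E py eqxx.
rewrite !sum_nat_const in h1 h2.
rewrite KA in h1.
have hD : #|K :\: A| = (#|K| - #|A|)%N by rewrite cardsD KA.
rewrite hD in h2.
have a1 : (1 <= #|A|)%N by apply/card_gt0P; exists t; rewrite inE tK pt eqxx.
have a2 : (#|A| < #|K|)%N.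
  apply: proper_card; apply/properP; split.
    by apply/subsetP => y; rewrite inE => /andP[].
  by exists u => //; rewrite inE uK (negbTE pu).
rewrite KA.
move: h1 h2 a1 a2; set S1 := (\sum_(x in A) _)%N; set S2 := (\sum_(x in K :\: A) _)%N.
set a := #|A|; set k := #|K|; move=> h1 h2 a1 a2.
have : (k - 1 <= a * (k - a))%N.
  have [b hb ->] : exists2 b, (1 <= b)%N & k = (a + b)%N by exists (k - a)%N; lia.
  rewrite addKn; nia.
lia.
Qed.

Lemma cnt_upper (T C : finType) (K : {set T}) (p : T -> C) :
  (\sum_(x in K) #|[set y in K | p y != p x]| <= #|K| * (#|K| - 1))%N.
Proof.
rewrite -sum_nat_const; apply: leq_sum => x xK.
rewrite (cardsD1 x K) xK add1n subn1 /=.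
apply: subset_leq_card; apply/subsetP => y; rewrite !inE => /andP[yK h].
rewrite yK andbT; by apply: contraNneq h => ->.
Qed.

Lemma cnt_zero (T C : finType) (K : {set T}) (p : T -> C) (c : C) :
  (forall y, y \in K -> p y = c) ->
  (\sum_(x in K) #|[set y in K | p y != p x]| = 0)%N.
Proof.
move=> H; apply: big1 => x xK; apply/eqP; rewrite cards_eq0; apply/eqP/setP => y.
rewrite !inE; case yK: (y \in K) => //=; by rewrite (H _ yK) (H _ xK) eqxx.
Qed.
Lemma MW_eq (V C I : finType) (e : I -> {set V}) (l : I -> C) (Y : V -> C) :
  MultiwayCut e l Y = \sum_i (#|e i|%:R)^-1 * 2^-1 *
     (\sum_(x in clique_nodes (e i) (l i))
        #|[set y in clique_nodes (e i) (l i) | part Y y != part Y x]|)%:R.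
Proof.
rewrite /MultiwayCut /weightG'.
set K := fun i => clique_nodes (e i) (l i).
set w := fun i : I => (#|e i|%:R : rat)^-1.
have step : forall x, \sum_(y | part Y x != part Y y)
   \sum_(i | [&& x != y, x \in K i & y \in K i]) w i =
   \sum_i w i * ((x \in K i) * #|[set y in K i | part Y y != part Y x]|)%:R.
  move=> x.
  transitivity (\sum_y \sum_i
     (if [&& part Y x != part Y y, x \in K i & y \in K i] then w i else 0)).
    rewrite big_mkcond; apply: eq_bigr => y _.
    case: eqP => Hp /=.
      by rewrite big1 // => i _; rewrite Hp eqxx.
    rewrite big_mkcond; apply: eq_bigr => i _.
    have -> : (x != y) = true.
      by apply/negP => /eqP E; apply: Hp; rewrite E.
    by [].
  rewrite exchange_big; apply: eq_bigr => i _.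
  case xK: (x \in K i); last by rewrite mul0n mulr0 big1 // => y _; rewrite andbF.
  rewrite mul1n -sum1_card natr_sum mulr_sumr [RHS]big_mkcond /=.
  apply: eq_bigr => y _; rewrite [in RHS]in_set [part Y x == _]eq_sym andbC.
  by case: ifP; rewrite ?mulr1.
under eq_bigr do rewrite step.
rewrite exchange_big mulr_sumr; apply: eq_bigr => i _.
rewrite -mulr_sumr mulrA [2^-1 * _]mulrC -natr_sum /w.
congr (_ * _%:R).
rewrite (big_mkcond (fun x => x \in K i)); apply: eq_bigr => x _.
by case: (x \in K i); rewrite ?mul1n ?mul0n.
Qed.

Lemma card_clique (V C : finType) (e : {set V}) (c : C) :
  #|clique_nodes e c| = (#|e|.+1)%N.
Proof.
rewrite /clique_nodes setUC cardsU1 card_imset; last exact: inl_inj.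
have -> : (inr c \notin [set inl x | x in e]) = true.
  by apply/negP => /imsetP [x _].
by [].
Qed.

Lemma edge_bound (V C : finType) (e : {set V}) (c : C) (Y : V -> C) (r : nat) :
  e != set0 -> (#|e| <= r)%N ->
  let cnt := (\sum_(x in clique_nodes e c)
        #|[set y in clique_nodes e c | part Y y != part Y x]|)%N in
  ((mistake e c Y)%:R <= (#|e|%:R : rat)^-1 * 2^-1 * cnt%:R) /\
  ((#|e|%:R : rat)^-1 * 2^-1 * cnt%:R <= (r.+1)%:R / 2 * (mistake e c Y)%:R).
Proof.
move=> ne0 ler cnt.
have k1 : (1 <= #|e|)%N by rewrite card_gt0.
have hK := card_clique _ _ e c.
rewrite /mistake; case: existsP => [[u /andP [ue Yu]] | nm] /=.
  have lo : (2 * #|e| <= cnt)%N.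
    have := @cnt_lower _ _ (clique_nodes e c) (part Y) c (inr c) (inl u).
    rewrite hK subn1 /=; apply => //.
      by rewrite !inE eqxx orbT.
    by rewrite !inE; apply/orP; left; apply/imsetP; exists u.
  have up : (cnt <= #|e|.+1 * #|e|)%N.
    by have := cnt_upper _ _ (clique_nodes e c) (part Y); rewrite hK subn1.
  have lo' : (2 * #|e|)%:R <= cnt%:R :> rat by rewrite ler_nat.
  have up' : cnt%:R <= (#|e|.+1 * #|e|)%:R :> rat by rewrite ler_nat.
  have k1' : 1%:R <= #|e|%:R :> rat by rewrite ler_nat.
  have ler' : #|e|%:R <= r%:R :> rat by rewrite ler_nat.
  move: lo' up' k1' ler'; rewrite !natrM -!natr1.
  set k := (#|e|%:R : rat); set x := (cnt%:R : rat); set rr := (r%:R : rat).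
  move=> lo' up' k1' ler'.
  have kp : 0 < k.
    lra.
  have E : k^-1 * 2^-1 * x = x / (2 * k) by rewrite invfM; ring.
  rewrite E mulr1; split.
    by rewrite ler_pdivlMr ?mulr_gt0 // mul1r.
  rewrite ler_pdivrMr ?mulr_gt0 //.
  have -> : (rr + 1) / (0 + 1 + 1) * (2 * k) = (rr + 1) * k.
    by field.
  have h : (k + 1) * k <= (rr + 1) * k by apply: ler_wpM2r; [exact: ltW | rewrite lerD2r].
  exact: le_trans up' h.
have -> : cnt = 0%N.
  apply: (@cnt_zero _ _ _ _ c) => y; rewrite !inE => /orP [/imsetP [v ve ->] | /eqP ->] //=.
  case: (eqVneq (Y v) c) => // h; exfalso; apply: nm; exists v; by rewrite ve h.
by rewrite !mulr0.
Qed.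

Theorem mainTheorem7 (V C I : finType) (e : I -> {set V}) (l : I -> C)
  (He : forall i : I, e i != set0) (Y : V -> C) :
  let r := max_edge_size e in
  (CatEdgeClus e l Y)%:R <= MultiwayCut e l Y /\
  MultiwayCut e l Y <= ((r.+1)%:R / 2) * (CatEdgeClus e l Y)%:R.
Proof.
move=> r.
have hr : forall i, (#|e i| <= r)%N by move=> i; rewrite /r /max_edge_size; exact: (leq_bigmax i).
rewrite MW_eq /CatEdgeClus natr_sum; split.
  by apply: ler_sum => i _; case: (@edge_bound _ _ (e i) (l i) Y r (He i) (hr i)).
rewrite mulr_sumr; apply: ler_sum => i _; by case: (@edge_bound _ _ (e i) (l i) Y r (He i) (hr i)).
Qed.
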